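(* Let $G_1,G_2$ be induced subgraphs of a graph $G$ with $V(G)=V(G_1)\cup V(G_2)$ and $E(G)=E(G_1)\cup E(G_2)$, let $S$ be the subgraph induced by $V(G_1)\cap V(G_2)$, suppose $G-V(S)$ is disconnected and $S$ contains a nonedge $e$. If $G_1$ is an atom and either $G_2$ or $G_2\cup e$ is an atom, then $G$ is an atom.
   Context: A clique is a set of pairwise adjacent vertices (possibly empty). A clique separator of a graph $H$ is a clique $U$ such that $H-U$ (the subgraph induced by $V(H)\setminus U$) has at least two connected components. A graph is an atom if it is nonempty and has no clique separator. $G_2\cup e$ denotes $G_2$ with $e$ added as an edge. *)

(* Defs.v *)
(* A graph is given by a vertex set V : {set T} on a finType T
   and an adjacency relation r : rel T (only used on V).  G itself is the
   simple graph (T, e) with e symmetric and irreflexive. *)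
From mathcomp Require Import all_boot.
Set Implicit Arguments. Unset Strict Implicit. Unset Printing Implicit Defensive.

Section Graphs.
Variable T : finType.

Definition restr (r : rel T) (W : {set T}) : rel T :=
  [rel a b | [&& r a b, a \in W & b \in W]].

Definition disconnected (r : rel T) (W : {set T}) : Prop :=
  exists x y, [/\ x \in W, y \in W & ~~ connect (restr r W) x y].

Definition clique (r : rel T) (U : {set T}) : Prop :=
  forall x y, x \in U -> y \in U -> x != y -> r x y.

Definition clique_separator (r : rel T) (V U : {set T}) : Prop :=
  [/\ U \subset V, clique r U & disconnected r (V :\: U)].

Definition atom (r : rel T) (V : {set T}) : Prop :=
  V != set0 /\ forall U : {set T}, ~ clique_separator r V U.

Definition add_edge (r : rel T) (u v : T) : rel T :=
  [rel a b | [|| r a b, (a == u) && (b == v) | (a == v) && (b == u)]].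

End Graphs.

(* Main.v *)
Require Import Defs.
From mathcomp Require Import all_boot.

Lemma atom_conn (T : finType) (r : rel T) (V U : {set T}) :
  atom r V -> clique r (V :&: U) ->
  forall x y, x \in V -> y \in V -> x \notin U -> y \notin U ->
  connect (restr r (V :\: (V :&: U))) x y.
Proof.
move=> [_ H] hc x y xV yV xU yU.
case: (boolP (connect _ x y)) => // hn; exfalso.
apply: (H (V :&: U)); split.
- exact: subsetIl.
- exact: hc.
- by exists x, y; split; rewrite ?inE ?xV ?xU ?yV ?yU.
Qed.

Lemma lift_conn (T : finType) (r : rel T) (A W : {set T}) x y :
  A \subset W -> connect (restr r A) x y -> connect (restr r W) x y.
Proof.
move=> sAW; apply: connect_sub => a b /= /and3P [hab aA bA].
apply: connect1; by rewrite /restr /= hab (subsetP sAW _ aA) (subsetP sAW _ bA).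
Qed.

Theorem mainTheorem17 (T : finType) (e : rel T)
  (e_sym : symmetric e) (e_irr : irreflexive e)
  (V1 V2 : {set T})
  (hV : V1 :|: V2 = [set: T])
  (hE : forall x y, e x y ->
          (x \in V1 /\ y \in V1) \/ (x \in V2 /\ y \in V2))
  (hdis : disconnected e (~: (V1 :&: V2)))
  (u v : T) (hu : u \in V1 :&: V2) (hv : v \in V1 :&: V2)
  (huv : u != v) (hne : ~~ e u v) :
  atom e V1 -> (atom e V2 \/ atom (add_edge e u v) V2) ->
  atom e [set: T].
Proof.
move=> A1 A2; split.
  by apply/set0Pn; exists u; rewrite inE.
move=> U [_ hc [x [y [xW yW]]]].
set W := [set: T] :\: U.
have sym : connect_sym (restr e W).
  apply: sym_connect_sym => a b; rewrite /restr /= e_sym.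
  by case: (e b a); rewrite //= andbC.
have inW z : (z \in W) = (z \notin U) by rewrite !inE andbT.
move: xW yW; rewrite !inW => xU yU.
have c1 : clique e (V1 :&: U).
  by move=> a b /setIP [_ aU] /setIP [_ bU]; apply: hc.
have C1 a b : a \in V1 -> b \in V1 -> a \notin U -> b \notin U ->
    connect (restr e W) a b.
  move=> aV bV aU bU; apply: (@lift_conn _ _ (V1 :\: (V1 :&: U))).
    by apply/subsetP => z; rewrite !inE; case: (z \in V1); case: (z \in U).
  exact: atom_conn.
have sB : V2 :\: (V2 :&: U) \subset W.
  by apply/subsetP => z; rewrite !inE; case: (z \in V2); case: (z \in U).
move: hu hv => /setIP [uV1 uV2] /setIP [vV1 vV2].
have C2 a b : a \in V2 -> b \in V2 -> a \notin U -> b \notin U ->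
    connect (restr e W) a b.
  move=> aV bV aU bU; case: A2 => A2.
    apply: (@lift_conn _ _ _ _ _ _ sB); apply: atom_conn => //.
    by move=> p q /setIP [_ pU] /setIP [_ qU]; apply: hc.
  have : connect (restr (add_edge e u v) (V2 :\: (V2 :&: U))) a b.
    apply: atom_conn => //.
    by move=> p q /setIP [_ pU] /setIP [_ qU] pq; rewrite /add_edge /= (hc p q pU qU pq).
  apply: connect_sub => p q /= /and3P [hpq pB qB].
  have pU : p \notin U by move: pB; rewrite !inE; case: (p \in U); case: (p \in V2).
  have qU : q \notin U by move: qB; rewrite !inE; case: (q \in U); case: (q \in V2).
  case/or3P: hpq => [hpq | /andP [/eqP Hp /eqP Hq] | /andP [/eqP Hp /eqP Hq]].
  - by apply: connect1; rewrite /restr /= hpq !inW pU qU.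
  - by subst; apply: C1.
  - by subst; apply: C1.
have [w [wV1 wV2 wU]] : exists w, [/\ w \in V1, w \in V2 & w \notin U].
  case: (boolP (u \in U)) => uU; last by exists u.
  case: (boolP (v \in U)) => vU; last by exists v.
  by move: hne; rewrite hc.
have Cw z : z \notin U -> connect (restr e W) z w.
  move=> zU; have : z \in V1 :|: V2 by rewrite hV inE.
  case/setUP => zV; [exact: C1 | exact: C2].
have := Cw _ yU; rewrite sym => hy.
by rewrite (connect_trans (Cw _ xU) hy) in hdis *.
Qed.
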